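(* Let $\vec d=(\vec a,\vec b)$ be a bidegree sequence of length $n$ with $\sum_{i=1}^n a_i=\sum_{i=1}^n b_i=n\bar c$. Suppose $M_a,M_b\in\mathbb{N}$ satisfy $\max_i a_i\le M_a$, $\max_i b_i\le M_b$ and $(M_a+1)M_b\le n\bar c$. Then $\vec d$ is graphic. In particular, if $\max\vec d\le\sqrt{\tfrac14+n\bar c}-\tfrac12$, then $\vec d$ is graphic.
   Context: A bidegree sequence of length $n$ is a pair $\vec d=(\vec a,\vec b)$ with $\vec a=(a_1,\dots,a_n)\in\mathbb{N}_0^n$ and $\vec b=(b_1,\dots,b_n)\in\mathbb{N}_0^n$. It is graphic with loops if there is an $n\times n$ matrix with entries in $\{0,1\}$ whose $i$th row sum is $a_i$ and whose $i$th column sum is $b_i$ for every $i\in[1..n]$; it is graphic if such a matrix exists with all diagonal entries equal to $0$. $\max\vec d$ and $\min\vec d$ denote the maximum and minimum over all $2n$ entries $a_1,\dots,a_n,b_1,\dots,b_n$. The number $\bar c$ (the average degree) is defined by $\sum_i a_i=\sum_i b_i=n\bar c$. *)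

(* Defs.v *)
From HB Require Import structures.
From mathcomp Require Import all_boot all_order all_algebra.
Set Implicit Arguments. Unset Strict Implicit. Unset Printing Implicit Defensive.
Import Order.TTheory GRing.Theory Num.Theory.

(* A bidegree sequence of length n is a pair (a, b) of functions 'I_n -> nat. *)

Definition graphic_with_loops (n : nat) (a b : 'I_n -> nat) : Prop :=
  exists M : 'I_n -> 'I_n -> bool,
    (forall i, \sum_(j < n) (M i j : nat) = a i) /\
    (forall j, \sum_(i < n) (M i j : nat) = b j).

Definition graphic (n : nat) (a b : 'I_n -> nat) : Prop :=
  exists M : 'I_n -> 'I_n -> bool,
    (forall i, M i i = false) /\
    (forall i, \sum_(j < n) (M i j : nat) = a i) /\
    (forall j, \sum_(i < n) (M i j : nat) = b j).

(* max over all 2n entries a_1..a_n, b_1..b_n (0 when n = 0) *)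
Definition maxd (n : nat) (a b : 'I_n -> nat) : nat :=
  \max_(i < n) maxn (a i) (b i).

(* Main.v *)
Require Import Defs.
From HB Require Import structures.
From mathcomp Require Import all_boot all_order all_algebra.
From mathcomp Require Import zify ring lra.
From Stdlib Require Import Classical.
Import Order.TTheory GRing.Theory Num.Theory.
Set Implicit Arguments. Unset Strict Implicit.

Definition ssum n (R : 'I_n -> bool) (a : 'I_n -> nat) := \sum_(i < n) R i * a i.
Definition ec n (E : 'I_n -> 'I_n -> bool) (R C : 'I_n -> bool) :=
  \sum_(i < n) \sum_(j < n) ((R i && ~~ C j && E i j) : nat).
Definition gcond n (E : 'I_n -> 'I_n -> bool) (a b : 'I_n -> nat) :=
  forall R C : 'I_n -> bool, ssum R a <= ssum C b + ec E R C.

Lemma sum_eq1 n (j0 : 'I_n) (F : 'I_n -> nat) : \sum_(j < n) (j == j0) * F j = F j0.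
Proof.
rewrite (bigD1 j0) //= eqxx mul1n big1 ?addn0 // => j /negbTE ->; by rewrite mul0n.
Qed.

Lemma ec_del n (E : 'I_n -> 'I_n -> bool) i0 j0 R C : E i0 j0 ->
  ec E R C = ec (fun i j => E i j && ~~ ((i == i0) && (j == j0))) R C + (R i0 && ~~ C j0).
Proof.
move=> hE; rewrite /ec.
have -> : (R i0 && ~~ C j0 : nat) = \sum_(i < n) (i == i0) * \sum_(j < n) (j == j0) * (R i0 && ~~ C j0).
  by rewrite !sum_eq1.
rewrite -big_split; apply: eq_bigr => i _ /=.
rewrite big_distrr -big_split; apply: eq_bigr => j _ /=.
case: (eqVneq i i0) => [->|_]; case: (eqVneq j j0) => [->|_];
  rewrite ?hE /= ?muln0 ?mul0n ?mul1n ?addn0 ?andbT ?andbF ?andbA ?addn0 ?add0n //.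
Qed.

Lemma ssum_del n (a : 'I_n -> nat) i0 R : 0 < a i0 ->
  ssum R a = ssum R (fun i => a i - (i == i0)) + R i0.
Proof.
move=> ha; rewrite /ssum.
have -> : (R i0 : nat) = \sum_(i < n) (i == i0) * R i0 by rewrite sum_eq1.
rewrite -big_split; apply: eq_bigr => i _ /=.
case: (eqVneq i i0) => [->|_]; rewrite ?subn0 ?mul0n ?addn0 //.
case: (R i0); rewrite /= ?mul0n ?mul1n //; lia.
Qed.

Lemma subm n (E : 'I_n -> 'I_n -> bool) a b i0 j0 (R1 C1 R2 C2 : 'I_n -> bool) :
  gcond E a b -> E i0 j0 -> R1 i0 -> ~~ C1 j0 ->
  ssum C1 b + ec E R1 C1 <= ssum R1 a -> ~~ R2 i0 -> C2 j0 ->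
  ssum C2 b + ec E R2 C2 <= ssum R2 a -> False.
Proof.
move=> hc hE r1 c1 t1 r2 c2 t2.
have hU := hc (fun i => R1 i || R2 i) (fun j => C1 j || C2 j).
have hI := hc (fun i => R1 i && R2 i) (fun j => C1 j && C2 j).
have mA : ssum (fun i => R1 i || R2 i) a + ssum (fun i => R1 i && R2 i) a
   = ssum R1 a + ssum R2 a.
  rewrite /ssum -!big_split; apply: eq_bigr => i _ /=.
  by case: (R1 i); case: (R2 i); rewrite /= ?mul0n ?mul1n ?addn0.
have mB : ssum (fun i => C1 i || C2 i) b + ssum (fun i => C1 i && C2 i) b
   = ssum C1 b + ssum C2 b.
  rewrite /ssum -!big_split; apply: eq_bigr => i _ /=.
  by case: (C1 i); case: (C2 i); rewrite /= ?mul0n ?mul1n ?addn0.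
have mE : ec E (fun i => R1 i || R2 i) (fun j => C1 j || C2 j)
   + ec E (fun i => R1 i && R2 i) (fun j => C1 j && C2 j) + 1
   <= ec E R1 C1 + ec E R2 C2.
  have -> : 1 = \sum_(i < n) (i == i0) * \sum_(j < n) (j == j0) * 1.
    by rewrite !sum_eq1.
  rewrite /ec -!big_split; apply: leq_sum => i _ /=.
  rewrite big_distrr -!big_split; apply: leq_sum => j _ /=.
  case: (eqVneq i i0) => [->|_]; case: (eqVneq j j0) => [->|_];
    rewrite ?hE ?r1 ?(negbTE c1) ?(negbTE r2) ?c2 /= ?muln0 ?mul0n ?addn0 //;
    by case: (R1 _); case: (R2 _); case: (C1 _); case: (C2 _); case: (E _ _).
lia.
Qed.

Lemma gale n N : forall (E : 'I_n -> 'I_n -> bool) a b,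
  ec E (fun _ => true) (fun _ => false) = N ->
  \sum_(i < n) a i = \sum_(j < n) b j -> gcond E a b ->
  exists F : 'I_n -> 'I_n -> bool, (forall i j, F i j -> E i j) /\
    (forall i, \sum_(j < n) (F i j : nat) = a i) /\
    (forall j, \sum_(i < n) (F i j : nat) = b j).
Proof.
elim: N => [|N IH] E a b hN hs hc.
  have h0 : ssum (fun _ => true) a <= 0.
    have := hc (fun _ => true) (fun _ => false); rewrite hN.
    by rewrite [ssum (fun _ => false) b]/ssum big1 // addn0.
  have ha : forall i, a i = 0.
    move=> i; move: h0; rewrite /ssum (bigD1 i) //=; lia.
  have hb : forall j, b j = 0.
    move=> j; have : \sum_(j < n) b j = 0.
      by rewrite -hs big1 // => i _; rewrite ha.
    rewrite (bigD1 j) //=; lia.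
  exists (fun _ _ => false); split => // ; split => i; rewrite big1 ?ha ?hb //.
case: (boolP [exists i, exists j, E i j]) => [/existsP[i0 /existsP[j0 hE]] | hne]; last first.
  exfalso; move: hN; rewrite /ec big1 // => i _; rewrite big1 // => j _.
  case hij: (E i j) => //; case/negP: hne; apply/existsP; exists i; apply/existsP; by exists j.
pose E' := fun i j => E i j && ~~ ((i == i0) && (j == j0)).
have hdel : forall R C, ec E R C = ec E' R C + (R i0 && ~~ C j0).
  by move=> R C; apply: ec_del.
have hN' : ec E' (fun _ => true) (fun _ => false) = N.
  by move: hN; rewrite hdel /=; lia.
have hE'0 : E' i0 j0 = false by rewrite /E' !eqxx andbF.
have sub' : forall i j, E' i j -> E i j by move=> i j /andP[].
case: (classic (gcond E' a b)) => hc1.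
  have [F [h1 h2]] := IH E' a b hN' hs hc1; exists F; split => // i j /h1; exact: sub'.
move: hc1; rewrite /gcond => /not_all_ex_not [R1 /not_all_ex_not [C1 /negP]].
rewrite -ltnNge => hv.
have hc1 := hc R1 C1; rewrite hdel in hc1.
case hrc: (R1 i0 && ~~ C1 j0) hc1; last by rewrite addn0 => hc1; lia.
rewrite /= => hc1; move/andP: hrc => [r1 c1].
have t1 : ssum C1 b + ec E R1 C1 <= ssum R1 a by rewrite hdel r1 c1 /=; lia.
have ha0 : 0 < a i0.
  rewrite lt0n; apply/negP => /eqP ha0.
  apply: (subm hc hE r1 c1 t1 (R2 := fun i => i != i0) (C2 := fun _ => true)) => //=; try by rewrite eqxx.
  - have -> : ec E (fun i => i != i0) (fun _ => true) = 0.
      by rewrite /ec big1 // => i _; rewrite big1 // => j _; rewrite andbF.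
    rewrite addn0 /ssum.
    have -> : \sum_(i < n) (true : nat) * b i = \sum_(i < n) a i.
      by rewrite hs; apply: eq_bigr => i _; rewrite mul1n.
    apply: leq_sum => i _; case: (eqVneq i i0) => [->|_]; by rewrite ?ha0 //= mul1n.
have hb0 : 0 < b j0.
  rewrite lt0n; apply/negP => /eqP hb0.
  apply: (subm hc hE r1 c1 t1 (R2 := fun _ => false) (C2 := fun j => j == j0)) => //=; try by rewrite eqxx.
  rewrite /ssum sum_eq1 hb0 /ec big1 // => k _; rewrite big1 //.
pose a' := fun i => a i - (i == i0).
pose b' := fun j => b j - (j == j0).
have hsa : forall R, ssum R a = ssum R a' + R i0 by move=> R; exact: (ssum_del R ha0).
have hsb : forall C, ssum C b = ssum C b' + C j0 by move=> C; exact: (ssum_del C hb0).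
have hs' : \sum_(i < n) a' i = \sum_(j < n) b' j.
  have := hsa (fun _ => true); have := hsb (fun _ => true); rewrite /ssum.
  have e1 : forall f : 'I_n -> nat, \sum_(i < n) (true : nat) * f i = \sum_(i < n) f i.
    by move=> f; apply: eq_bigr => i _; rewrite mul1n.
  rewrite !e1 /= => h1 h2; by apply/eqP; rewrite -(eqn_add2r 1) -h1 -h2 hs.
case: (classic (gcond E' a' b')) => hc2.
  have [F [h1 [h2 h3]]] := IH E' a' b' hN' hs' hc2.
  have hF0 : F i0 j0 = false by apply/negP => /h1; rewrite hE'0.
  exists (fun i j => F i j || ((i == i0) && (j == j0))); split; [|split].
  - move=> i j /orP[/h1/sub' //|/andP[/eqP-> /eqP->]] //.
  - move=> i; have -> : \sum_(j < n) ((F i j || ((i == i0) && (j == j0))) : nat)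
        = \sum_(j < n) (F i j : nat) + \sum_(j < n) (j == j0) * (i == i0).
      rewrite -big_split; apply: eq_bigr => j _ /=.
      case: (eqVneq i i0) => [->|_]; case: (eqVneq j j0) => [->|_];
        rewrite ?hF0 /= ?orbF ?muln0 ?mul0n ?addn0 //.
    rewrite sum_eq1 h2 /a'; case: (eqVneq i i0) => [->|_] /=; lia.
  - move=> j; have -> : \sum_(i < n) ((F i j || ((i == i0) && (j == j0))) : nat)
        = \sum_(i < n) (F i j : nat) + \sum_(i < n) (i == i0) * (j == j0).
      rewrite -big_split; apply: eq_bigr => i _ /=.
      case: (eqVneq i i0) => [->|_]; case: (eqVneq j j0) => [->|_];
        rewrite ?hF0 /= ?orbF ?muln0 ?mul0n ?addn0 //.
    rewrite sum_eq1 h3 /b'; case: (eqVneq j j0) => [->|_] /=; lia.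
exfalso.
move: hc2; rewrite /gcond => /not_all_ex_not [R2 /not_all_ex_not [C2 /negP]].
rewrite -ltnNge => hv2.
have hc2 := hc R2 C2; rewrite hdel hsa hsb in hc2.
move: hv2 hc2; case r2: (R2 i0); case c2: (C2 j0) => /=; try lia.
move=> hv2 hc2.
apply: (subm hc hE r1 c1 t1 (R2 := R2) (C2 := C2)); rewrite ?r2 ?c2 //.
rewrite hdel hsa hsb r2 c2 /=; lia.
Qed.

Lemma cond_diag n (a b : 'I_n -> nat) Ma Mb : (forall i, a i <= Ma) -> (forall i, b i <= Mb) ->
  (Ma + 1) * Mb <= \sum_(i < n) a i -> \sum_(i < n) a i = \sum_(j < n) b j ->
  gcond (fun i j => i != j) a b.
Proof.
move=> ha hb hS hs R C.
set x := \sum_(i < n) (R i : nat).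
set y := \sum_(j < n) (~~ C j : nat).
set z := \sum_(i < n) (R i && ~~ C i : nat).
have h1 : ssum R a <= x * Ma.
  rewrite /ssum /x big_distrl; apply: leq_sum => i _; case: (R i) => /=; rewrite ?mul1n ?mul0n //.
have h2 : ssum R a <= \sum_(i < n) a i.
  rewrite /ssum; apply: leq_sum => i _; case: (R i) => /=; rewrite ?mul1n ?mul0n //.
have h3 : ssum C b + ssum (fun j => ~~ C j) b = \sum_(j < n) b j.
  rewrite /ssum -big_split; apply: eq_bigr => i _; case: (C i) => /=; rewrite ?mul1n ?mul0n ?addn0 //.
have h4 : ssum (fun j => ~~ C j) b <= y * Mb.
  rewrite /ssum /y big_distrl; apply: leq_sum => i _; case: (C i) => /=; rewrite ?mul1n ?mul0n //.
have h5 : ec (fun i j => i != j) R C + z = x * y.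
  rewrite /ec /z /x -big_split big_distrl; apply: eq_bigr => i _ /=.
  have -> : (R i && ~~ C i : nat) = \sum_(j < n) (j == i) * (R i && ~~ C j) by rewrite sum_eq1.
  rewrite -big_split /y big_distrr; apply: eq_bigr => j _ /=.
  case: (eqVneq i j) => [<-|hij]; rewrite ?eqxx /=;
    by case: (R i); case: (C _).
have h6 : z <= x by apply: leq_sum => i _; case: (R i); case: (C i).
have h7 : z <= y by apply: leq_sum => i _; case: (R i); case: (C i).
move: h1 h2 h3 h4 h5 h6 h7; rewrite -hs.
set A := ssum R a; set B := ssum C b; set B' := ssum _ b; set e := ec _ R C.
set S := \sum_(i < n) a i.
move=> h1 h2 h3 h4 h5 h6 h7.
case: (leqP (Mb + 1) x) => hx.
  have : y * Mb + y <= x * y by nia.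
  lia.
case: (leqP (Ma + 1) y) => hy.
  have : x * Ma + x <= x * y by nia.
  lia.
have [u hu] : exists u, Mb = x + u by exists (Mb - x); lia.
have [v hv] : exists v, Ma = y + v by exists (Ma - y); lia.
subst Ma Mb.
nia.
Qed.

Theorem theorem4 (n : nat) (a b : 'I_n -> nat) :
  \sum_(i < n) a i = \sum_(i < n) b i ->
  (forall Ma Mb : nat,
     (forall i, a i <= Ma) -> (forall i, b i <= Mb) ->
     (Ma + 1) * Mb <= \sum_(i < n) a i ->
     graphic a b) /\
  (forall R : rcfType,
     ((maxd a b)%:R : R) <=
       Num.sqrt (1 / 4 + (\sum_(i < n) a i)%:R) - 1 / 2 ->
     graphic a b)%R.
Proof.
move=> hs.
have P1 : forall Ma Mb : nat,
     (forall i, a i <= Ma) -> (forall i, b i <= Mb) ->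
     (Ma + 1) * Mb <= \sum_(i < n) a i -> graphic a b.
  move=> Ma Mb ha hb hS.
  have [F [hF [h1 h2]]] := @gale n _ (fun i j => i != j) a b (erefl _) hs (cond_diag ha hb hS hs).
  exists F; split => // i; apply/negP => /hF; by rewrite eqxx.
split => // R hR.
have hm : forall i, maxn (a i) (b i) <= maxd a b.
  by move=> i; rewrite /maxd; exact: leq_bigmax.
apply: (P1 (maxd a b) (maxd a b)).
- by move=> i; apply: leq_trans (hm i); apply: leq_maxl.
- by move=> i; apply: leq_trans (hm i); apply: leq_maxr.
set m := maxd a b in hR *.
set S := \sum_(i < n) a i in hR *.
have X0 : ((0 : R) <= 1 / 4 + S%:R)%R.
  by apply: addr_ge0; [apply: divr_ge0 | apply: ler0n].
have sq := sqr_sqrtr X0.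
have s0 := sqrtr_ge0 (1 / 4 + S%:R : R)%R.
have m0 : ((0 : R) <= m%:R)%R by apply: ler0n.
have : (((m * m + m)%:R : R) <= S%:R)%R.
  rewrite natrD natrM; nra.
rewrite ler_nat; lia.
Qed.
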